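(* Let $(E,\mathcal L)$ be a simple affine oriented matroid satisfying (S): $|S(X,Y)|<\infty$ for all $X,Y\in\mathcal L$. Let $\pi$ be a parallelism class with its total order $<_\pi$. Then $(\pi,<_\pi)$ or its reverse is order isomorphic to exactly one of: $(\mathbb Z,<)$ (if $\pi$ has neither a minimum nor a maximum), $(\mathbb N,<)$ (if exactly one extremum exists, the order being reversed if necessary so that it is a minimum), or $\{0,1,\dots,|\pi|-1\}$ (if both a minimum and a maximum exist; then $\pi$ is finite).
   Context: A sign vector on a set $E$ is an element of $\{+,-,0\}^E$; $-X$ is defined by $(-X)(e)=-X(e)$. The separator of $X,Y$ is $S(X,Y)=\{e\in E: X(e)\neq0\neq Y(e),\ X(e)\neq Y(e)\}$. The composition $X\circ Y$ is given by $(X\circ Y)(e)=X(e)$ if $X(e)\neq0$ and $Y(e)$ otherwise; $X\oplus Y$ is $0$ on $S(X,Y)$ and equals $X\circ Y$ elsewhere. For sets of sign vectors, $\mathcal A\circ\mathcal B=\{X\circ Y:X\in\mathcal A,Y\in\mathcal B\}$, $-\mathcal A=\{-X:X\in\mathcal A\}$. For $\mathcal L\subseteq\{+,-,0\}^E$ let $I_e(X,Y;\mathcal L)=\{Z\in\mathcal L:Z(e)=0,\ Z(f)=(X\circ Y)(f)\ \forall f\notin S(X,Y)\}$, $I(X,Y;\mathcal L)=\bigcup_{e\in S(X,Y)}I_e(X,Y;\mathcal L)$ and $\mathcal P(\mathcal L)=\{X\oplus(-Y):X,Y\in\mathcal L,\ I(X,-Y;\mathcal L)=I(-X,Y;\mathcal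 L)=\emptyset\}$. An affine oriented matroid (AOM) on an arbitrary set $E$ is a pair $(E,\mathcal L)$, $\mathcal L\subseteq\{+,-,0\}^E$, satisfying (FS) $\mathcal L\circ(-\mathcal L)\subseteq\mathcal L$; (SE) for all $X,Y\in\mathcal L$ and $e\in S(X,Y)$, $I_e(X,Y;\mathcal L)\ne\emptyset$; (P) $\mathcal P(\mathcal L)\circ\mathcal L\subseteq\mathcal L$. Elements $e,f\in E$ are equivalent if $X(e)=X(f)$ for all $X\in\mathcal L$, or $X(e)=-X(f)$ for all $X\in\mathcal L$; $e$ is redundant if $X(e)=Y(e)$ for all $X,Y\in\mathcal L$. The AOM is simple if it has no redundant elements and no two distinct equivalent elements. Two elements $e,f$ are parallel, $e\parallel f$, if there is no $X\in\mathcal L$ with $X(e)=X(f)=0$; in a simple AOM the reflexive closure of $\parallel$ is an equivalence relation whose classes are the parallelism classes. On a parallelism class $\pi$ the relation $[a,b,c]$ holds iff $a,b,c$ are pairwise distinct and for all $X,Z\in\mathcal L$, $X(a)=0$ and $Z(c)=0$ imply $X(b)=-Z(b)$; $<_\pi$ is the total order on $\pi$ (unique up to reversal) such that $[a,b,c]$ iff $a<_\pi b<_\pi c$ or $c<_\pi b<_\pi a$. *)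

(* Defs.v *)
From Stdlib Require Import ZArith List.

Inductive sign := Pos | Neg | Zer.

Definition sopp (s : sign) : sign :=
  match s with Pos => Neg | Neg => Pos | Zer => Zer end.

Section AOM.
Variable E : Type.

Definition signvec := E -> sign.
Definition svset := signvec -> Prop.

Definition svneg (X : signvec) : signvec := fun e => sopp (X e).

Definition sep (X Y : signvec) (e : E) : Prop :=
  X e <> Zer /\ Y e <> Zer /\ X e <> Y e.

Definition comp (X Y : signvec) : signvec :=
  fun e => match X e with Zer => Y e | s => s end.

Definition oplus (X Y : signvec) : signvec :=
  fun e => match X e, Y e with
           | Pos, Neg => Zer
           | Neg, Pos => Zer
           | Zer, t => t
           | s, _ => s
           end.

Definition Ie (L : svset) (X Y : signvec) (e : E) : svset :=
  fun Z => L Z /\ Z e = Zer /\ forall f, ~ sep X Y f -> Z f = comp X Y f.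

Definition Iset (L : svset) (X Y : signvec) : svset :=
  fun Z => exists e, sep X Y e /\ Ie L X Y e Z.

Definition Pset (L : svset) : svset :=
  fun W => exists X Y, L X /\ L Y /\
    (forall Z, ~ Iset L X (svneg Y) Z) /\
    (forall Z, ~ Iset L (svneg X) Y Z) /\
    W = oplus X (svneg Y).

Definition is_AOM (L : svset) : Prop :=
  (forall X Y, L X -> L Y -> L (comp X (svneg Y))) /\
  (forall X Y e, L X -> L Y -> sep X Y e -> exists Z, Ie L X Y e Z) /\
  (forall W X, Pset L W -> L X -> L (comp W X)).

Definition equivalent_elts (L : svset) (e f : E) : Prop :=
  (forall X, L X -> X e = X f) \/ (forall X, L X -> X e = sopp (X f)).

Definition redundant (L : svset) (e : E) : Prop :=
  forall X Y, L X -> L Y -> X e = Y e.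

Definition simple_AOM (L : svset) : Prop :=
  is_AOM L /\
  (forall e, ~ redundant L e) /\
  (forall e f, e <> f -> ~ equivalent_elts L e f).

Definition finite_separators (L : svset) : Prop :=
  forall X Y, L X -> L Y -> exists l : list E, forall e, sep X Y e -> In e l.

Definition parallel (L : svset) (e f : E) : Prop :=
  ~ exists X, L X /\ X e = Zer /\ X f = Zer.

Definition parallelism_class (L : svset) (pi : E -> Prop) : Prop :=
  exists e, forall f, pi f <-> (f = e \/ parallel L e f).

Definition between (L : svset) (a b c : E) : Prop :=
  a <> b /\ b <> c /\ a <> c /\
  forall X Z, L X -> L Z -> X a = Zer -> Z c = Zer -> X b = sopp (Z b).

Definition strict_total_on (pi : E -> Prop) (lt : E -> E -> Prop) : Prop :=
  (forall a, pi a -> ~ lt a a) /\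
  (forall a b c, pi a -> pi b -> pi c -> lt a b -> lt b c -> lt a c) /\
  (forall a b, pi a -> pi b -> a <> b -> lt a b \/ lt b a).

Definition is_pi_order (L : svset) (pi : E -> Prop) (lt : E -> E -> Prop) : Prop :=
  strict_total_on pi lt /\
  forall a b c, pi a -> pi b -> pi c ->
    (between L a b c <-> ((lt a b /\ lt b c) \/ (lt c b /\ lt b a))).

Definition has_min (pi : E -> Prop) (lt : E -> E -> Prop) : Prop :=
  exists m, pi m /\ forall x, pi x -> x <> m -> lt m x.

Definition has_max (pi : E -> Prop) (lt : E -> E -> Prop) : Prop :=
  exists m, pi m /\ forall x, pi x -> x <> m -> lt x m.

End AOM.

Definition order_iso {A B : Type} (ltA : A -> A -> Prop) (ltB : B -> B -> Prop) : Prop :=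
  exists f : A -> B,
    (forall x y, f x = f y -> x = y) /\
    (forall y, exists x, f x = y) /\
    (forall x y, ltA x y <-> ltB (f x) (f y)).

Definition sub_of {E : Type} (pi : E -> Prop) := { e : E | pi e }.
Definition restr {E : Type} (pi : E -> Prop) (lt : E -> E -> Prop) :
  sub_of pi -> sub_of pi -> Prop := fun a b => lt (proj1_sig a) (proj1_sig b).

Definition flip_rel {E : Type} (lt : E -> E -> Prop) : E -> E -> Prop :=
  fun a b => lt b a.

Definition fin_nat (n : nat) := { k : nat | k < n }.
Definition fin_lt (n : nat) : fin_nat n -> fin_nat n -> Prop :=
  fun a b => proj1_sig a < proj1_sig b.

(* Main.v *)
Require Import Defs.
From Stdlib Require Import ZArith List.
From Stdlib Require Import Classical ClassicalEpsilon Lia.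

Definition FI {T} (pi : T -> Prop) (R : T -> T -> Prop) :=
  forall a c, pi a -> pi c -> exists l : list T, forall b, pi b -> R a b -> R b c -> In b l.

Definition succ {T} (x0 : T) (pi : T -> Prop) (R : T -> T -> Prop) (x : T) : T :=
  epsilon (inhabits x0) (fun y => pi y /\ R x y /\ forall z, pi z -> R x z -> ~ R z y).

Definition fseq {T} (x0 : T) pi R (n : nat) : T := Nat.iter n (succ x0 pi R) x0.

Definition Chain {T} (x0 : T) pi R n :=
  forall k, k <= n -> pi (fseq x0 pi R k) /\ (k < n -> R (fseq x0 pi R k) (fseq x0 pi R (S k))).

Lemma list_min {T} (pi : T->Prop) (R : T->T->Prop) (HT: strict_total_on T pi R)
  (Q : T -> Prop) (l : list T): (forall b, Q b -> pi b) ->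
  (~ exists b, In b l /\ Q b) \/ exists m, In m l /\ Q m /\ forall z, In z l -> Q z -> z = m \/ R m z.
Proof.
  intros HQ. destruct HT as [Hirr [Htr Htot]]. induction l as [|a l IH].
  - left. intros [b [[] _]].
  - destruct (classic (Q a)) as [Qa|nQa].
    + destruct IH as [IH|[m [Hm [Qm Hmin]]]].
      * right. exists a. split; [left; reflexivity|]. split; [exact Qa|].
        intros z [<-|Hz] Qz; [left; reflexivity|]. exfalso; apply IH; eauto.
      * destruct (classic (a = m)) as [<-|Ham].
        -- right. exists a. split; [left;auto|]. split; auto.
           intros z [<-|Hz] Qz; [left;auto|]. apply Hmin; auto.
        -- destruct (Htot a m (HQ a Qa) (HQ m Qm) Ham) as [Ham'|Hma].
           ++ right. exists a. split; [left;auto|]. split; [auto|].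
              intros z [<-|Hz] Qz; [left;auto|].
              destruct (Hmin z Hz Qz) as [ -> | Hmz ]; right; [auto|].
              apply (Htr a m z); auto.
           ++ right. exists m. split; [right;auto|]. split; [auto|].
              intros z [<-|Hz] Qz; [right;auto|]. apply Hmin; auto.
    + destruct IH as [IH|[m [Hm [Qm Hmin]]]].
      * left. intros [b [[<-|Hb] Qb]]; [contradiction|apply IH; eauto].
      * right. exists m. split; [right;auto|]. split; [auto|].
        intros z [<-|Hz] Qz; [contradiction|]. apply Hmin; auto.
Qed.

Lemma succ_spec {T} (x0 : T) pi R (HT : strict_total_on T pi R) (HF: FI pi R) x y :
  pi x -> pi y -> R x y ->
  pi (succ x0 pi R x) /\ R x (succ x0 pi R x) /\
  forall z, pi z -> R x z -> ~ R z (succ x0 pi R x).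
Proof.
  intros px py Rxy. unfold succ. apply epsilon_spec.
  destruct (HF x y px py) as [l Hl].
  pose proof HT as [Hirr [Htr Htot]].
  destruct (list_min pi R HT (fun b => pi b /\ R x b /\ R b y) l (fun b H => proj1 H))
    as [N|[m [Hm [[pm [Rxm Rmy]] Hmin]]]].
  - exists y. split; [auto|]. split; [auto|]. intros z pz Rxz Rzy. apply N. exists z; split; auto.
  - exists m. split; [auto|]. split; [auto|]. intros z pz Rxz Rzm.
    assert (Rzy: R z y) by (apply (Htr z m y); auto).
    destruct (Hmin z (Hl z pz Rxz Rzy) (conj pz (conj Rxz Rzy))) as [ -> | Rmz ].
    + apply (Hirr m pm Rzm).
    + apply (Hirr z pz (Htr z m z pz pm pz Rzm Rmz)).
Qed.

Lemma chain_mono {T} (x0 : T) pi R n : strict_total_on T pi R -> Chain x0 pi R n ->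
  forall i j, i < j -> j <= n -> R (fseq x0 pi R i) (fseq x0 pi R j).
Proof.
  intros [_ [Htr _]] HC i j Hij. induction Hij as [|j Hij IH]; intros Hjn.
  - destruct (HC i ltac:(lia)) as [_ H]; apply H; lia.
  - destruct (HC j ltac:(lia)) as [pj Hj].
    apply (Htr _ (fseq x0 pi R j)).
    + apply (HC i); lia.
    + exact pj.
    + apply (HC (S j)); lia.
    + apply IH; lia.
    + apply Hj; lia.
Qed.

Lemma chain_ext {T} (x0 : T) pi R n : Chain x0 pi R n -> pi (fseq x0 pi R (S n)) ->
  R (fseq x0 pi R n) (fseq x0 pi R (S n)) -> Chain x0 pi R (S n).
Proof.
  intros HC ps Rns k Hk. destruct (Nat.eq_dec k (S n)) as [ -> | Hne ].
  - split; [exact ps|lia].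
  - destruct (HC k ltac:(lia)) as [pk Hk']. split; [exact pk|]. intros Hlt.
    destruct (Nat.eq_dec k n) as [->|Hkn]; [exact Rns| apply Hk'; lia].
Qed.

Lemma nodup_map_seq {T} (f : nat -> T) n : forall a,
  (forall i j, a <= i -> i < j -> j < a + n -> f i <> f j) -> NoDup (map f (seq a n)).
Proof.
  induction n as [|n IHn]; intros a H; simpl.
  - constructor.
  - constructor.
    + intros Hin. apply in_map_iff in Hin. destruct Hin as [j [Hj Hin]].
      apply in_seq in Hin. apply (H a j); [lia|lia|lia|symmetry; exact Hj].
    + apply IHn. intros; apply H; lia.
Qed.

Lemma cover {T} (x0 : T) pi R (HT : strict_total_on T pi R) (HF : FI pi R) (p0 : pi x0) y
  (py : pi y) (Rxy : R x0 y) : exists n, fseq x0 pi R n = y /\ Chain x0 pi R n.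
Proof.
  destruct (HF x0 y p0 py) as [l Hl].
  assert (Hind: forall n, (exists k, fseq x0 pi R k = y /\ Chain x0 pi R k) \/
                          (Chain x0 pi R n /\ R (fseq x0 pi R n) y)).
  { induction n as [|n IH].
    - right. split; [|exact Rxy]. intros k Hk. assert (k=0) by lia. subst.
      split; [exact p0|lia].
    - destruct IH as [IH|[HC Rny]]; [left; exact IH|].
      destruct (HC n (le_n n)) as [pn _].
      destruct (succ_spec x0 pi R HT HF _ y pn py Rny) as [ps [Rns Hns]].
      assert (HC' : Chain x0 pi R (S n)) by (apply chain_ext; assumption).
      destruct (classic (fseq x0 pi R (S n) = y)) as [Heq|Hne].
      + left. exists (S n). auto.
      + destruct HT as [Hirr [Htr Htot]]. destruct (Htot _ _ ps py Hne) as [Hsy|Hys].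
        * right. auto.
        * exfalso. exact (Hns y py Rny Hys). }
  destruct (Hind (S (length l))) as [H|[HC Rny]]; [exact H|exfalso].
  pose proof HT as [Hirr [Htr Htot]].
  assert (Hnd: NoDup (map (fseq x0 pi R) (seq 1 (S (length l))))).
  { apply nodup_map_seq. intros i j Hi Hij Hj E.
    assert (Rij := chain_mono x0 pi R _ HT HC i j Hij ltac:(lia)).
    rewrite E in Rij. apply (Hirr _ (proj1 (HC j ltac:(lia))) Rij). }
  assert (Hinc: incl (map (fseq x0 pi R) (seq 1 (S (length l)))) l).
  { intros b Hb. apply in_map_iff in Hb. destruct Hb as [k [<- Hk]]. apply in_seq in Hk.
    assert (pk : pi (fseq x0 pi R k)) by (apply (HC k); lia).
    apply Hl.
    - exact pk.
    - change x0 with (fseq x0 pi R 0). apply (chain_mono x0 pi R _ HT HC); lia.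
    - destruct (Nat.eq_dec k (S (length l))) as [ -> | Hne ]; [exact Rny|].
      apply (Htr _ (fseq x0 pi R (S (length l)))); auto.
      + apply (HC (S (length l))); lia.
      + apply (chain_mono x0 pi R _ HT HC); lia. }
  pose proof (NoDup_incl_length Hnd Hinc) as H.
  rewrite length_map, length_seq in H. lia.
Qed.

Definition nomax {T} (pi : T -> Prop) (R : T -> T -> Prop) :=
  forall x, pi x -> exists y, pi y /\ R x y.

Lemma chain_all {T} (x0 : T) pi R (HT : strict_total_on T pi R) (HF : FI pi R) :
  pi x0 -> nomax pi R -> forall n, Chain x0 pi R n.
Proof.
  intros p0 Hnm n. induction n as [|n IH].
  - intros k Hk. assert (k=0) by lia. subst. split; [exact p0|lia].
  - destruct (IH n (le_n n)) as [pn _]. destruct (Hnm _ pn) as [y [py Ry]].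
    destruct (succ_spec x0 pi R HT HF _ y pn py Ry) as [ps [Rns _]].
    apply chain_ext; assumption.
Qed.

Lemma iso_gen {T A} (pi : T->Prop) R (ltA : A->A->Prop) (a0 : A) (h : A -> T) :
  strict_total_on T pi R -> (forall a, pi (h a)) -> (forall a b, ltA a b -> R (h a) (h b)) ->
  (forall a b, ltA a b \/ a = b \/ ltA b a) -> (forall y, pi y -> exists a, h a = y) ->
  order_iso (restr pi R) ltA.
Proof.
  intros [Hirr [Htr _]] Hpi Hmono Htri Hsurj.
  pose (g := fun y : sub_of pi => epsilon (inhabits a0) (fun a => h a = proj1_sig y)).
  assert (Hg : forall y, h (g y) = proj1_sig y).
  { intros [y py]. unfold g. apply epsilon_spec. simpl. exact (Hsurj y py). }
  exists g. split; [|split].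
  - intros [x px] [y py] E. pose proof (Hg (exist _ x px)) as H1.
    pose proof (Hg (exist _ y py)) as H2. simpl in *. rewrite E in H1. rewrite H1 in H2.
    subst y. f_equal. apply proof_irrelevance.
  - intros a. exists (exist _ (h a) (Hpi a)). pose proof (Hg (exist _ (h a) (Hpi a))) as H.
    simpl in H. remember (g (exist pi (h a) (Hpi a))) as a' eqn:Ea. clear Ea.
    destruct (Htri a' a) as [Hl|[He|Hr]].
    + apply Hmono in Hl. rewrite H in Hl. exfalso; exact (Hirr _ (Hpi a) Hl).
    + exact He.
    + apply Hmono in Hr. rewrite H in Hr. exfalso; exact (Hirr _ (Hpi a) Hr).
  - intros x y. unfold restr. split.
    + intros Rxy. destruct (Htri (g x) (g y)) as [Hl|[He|Hr]]; [exact Hl| |].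
      * exfalso. pose proof (Hg x) as H. pose proof (Hg y) as H0. rewrite He in H.
        rewrite H in H0. rewrite <- H0 in Rxy. exact (Hirr _ (proj2_sig x) Rxy).
      * exfalso. apply Hmono in Hr. rewrite !Hg in Hr. apply (Hirr (proj1_sig x) (proj2_sig x)).
        apply (Htr _ (proj1_sig y) _ (proj2_sig x) (proj2_sig y) (proj2_sig x) Rxy Hr).
    + intros Hl. apply Hmono in Hl. rewrite !Hg in Hl. exact Hl.
Qed.

Lemma iso_nat {T} (pi : T -> Prop) R x0 : strict_total_on T pi R -> FI pi R -> pi x0 ->
  (forall y, pi y -> ~ R y x0) -> nomax pi R -> order_iso (restr pi R) Nat.lt.
Proof.
  intros HT HF p0 Hmin Hnm.
  pose proof (chain_all x0 pi R HT HF p0 Hnm) as HC.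
  apply (iso_gen pi R Nat.lt 0 (fseq x0 pi R) HT).
  - intros n. apply (HC n n); lia.
  - intros a b Hab. apply (chain_mono x0 pi R b HT (HC b)); lia.
  - intros a b. lia.
  - intros y py. destruct (classic (y = x0)) as [ -> | Hne ]; [exists 0; reflexivity|].
    destruct HT as [Hirr [Htr Htot]].
    destruct (Htot y x0 py p0 Hne) as [Ry|Ry]; [exfalso; exact (Hmin y py Ry)|].
    destruct (cover x0 pi R (conj Hirr (conj Htr Htot)) HF p0 y py Ry) as [n [Hn _]].
    eauto.
Qed.

Lemma flip_total {T} (pi : T -> Prop) R : strict_total_on T pi R ->
  strict_total_on T pi (flip_rel R).
Proof.
  intros [Hirr [Htr Htot]]. unfold flip_rel. split; [exact Hirr|split].
  - intros a b c pa pb pc H1 H2. exact (Htr c b a pc pb pa H2 H1).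
  - intros a b pa pb Hne. destruct (Htot a b pa pb Hne); auto.
Qed.

Lemma flip_FI {T} (pi : T -> Prop) R : FI pi R -> FI pi (flip_rel R).
Proof.
  intros HF a c pa pc. destruct (HF c a pc pa) as [l Hl]. exists l.
  intros b pb H1 H2. apply Hl; auto.
Qed.

Lemma iso_Z {T} (pi : T -> Prop) R x0 : strict_total_on T pi R -> FI pi R -> pi x0 ->
  nomax pi R -> nomax pi (flip_rel R) -> order_iso (restr pi R) Z.lt.
Proof.
  intros HT HF p0 Hnm Hnm'.
  pose proof (flip_total pi R HT) as HT'. pose proof (flip_FI pi R HF) as HF'.
  pose proof (chain_all x0 pi R HT HF p0 Hnm) as HC.
  pose proof (chain_all x0 pi (flip_rel R) HT' HF' p0 Hnm') as HC'.
  pose (up := fseq x0 pi R). pose (dn := fseq x0 pi (flip_rel R)).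
  assert (pu : forall n, pi (up n)) by (intro n; apply (HC n n); lia).
  assert (pd : forall n, pi (dn n)) by (intro n; apply (HC' n n); lia).
  assert (mu : forall n m, n < m -> R (up n) (up m))
    by (intros n m H; apply (chain_mono x0 pi R m HT (HC m)); lia).
  assert (md : forall n m, n < m -> R (dn m) (dn n))
    by (intros n m H; apply (chain_mono x0 pi (flip_rel R) m HT' (HC' m)); lia).
  pose proof HT as [Hirr [Htr Htot]].
  pose (h := fun z => match z with Z0 => x0 | Zpos p => up (Pos.to_nat p)
                                 | Zneg p => dn (Pos.to_nat p) end).
  apply (iso_gen pi R Z.lt 0%Z h HT).
  - intros [|p|p]; simpl; auto.
  - intros [|p|q] [|p'|q'] H; simpl.
    all: pose proof (Pos2Nat.is_pos); try lia.
    + change x0 with (up 0). apply mu. apply Pos2Nat.is_pos.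
    + apply mu.
      assert (Pos.to_nat p < Pos.to_nat p')%nat; [|lia].
      apply Pos2Nat.inj_lt. exact H.
    + change x0 with (dn 0). apply md. apply Pos2Nat.is_pos.
    + apply (Htr _ x0); auto. 
      * change x0 with (dn 0). apply md. apply Pos2Nat.is_pos.
      * change x0 with (up 0). apply mu. apply Pos2Nat.is_pos.
    + apply md.
      assert (Z.of_nat (Pos.to_nat q') < Z.of_nat (Pos.to_nat q))%Z; [|lia].
      rewrite !positive_nat_Z. lia.
  - intros a b. lia.
  - intros y py. destruct (classic (y = x0)) as [ -> | Hne ]; [exists 0%Z; reflexivity|].
    destruct (Htot y x0 py p0 Hne) as [Ry|Ry].
    + destruct (cover x0 pi (flip_rel R) HT' HF' p0 y py Ry) as [n [Hn _]].
      destruct n as [|k]; [simpl in Hn; subst; exfalso; exact (Hirr _ p0 Ry)|].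
      exists (Zneg (Pos.of_succ_nat k)). simpl. rewrite SuccNat2Pos.id_succ. exact Hn.
    + destruct (cover x0 pi R HT HF p0 y py Ry) as [n [Hn _]].
      destruct n as [|k]; [simpl in Hn; subst; exfalso; exact (Hirr _ p0 Ry)|].
      exists (Zpos (Pos.of_succ_nat k)). simpl. rewrite SuccNat2Pos.id_succ. exact Hn.
Qed.

Lemma iso_fin {T} (pi : T -> Prop) R x0 M : strict_total_on T pi R -> FI pi R -> pi x0 ->
  (forall y, pi y -> ~ R y x0) -> pi M -> (forall y, pi y -> ~ R M y) ->
  exists n, order_iso (restr pi R) (fin_lt n).
Proof.
  intros HT HF p0 Hmin pM Hmax.
  pose proof HT as [Hirr [Htr Htot]].
  assert (HN : exists N, fseq x0 pi R N = M /\ Chain x0 pi R N).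
  { destruct (classic (M = x0)) as [ -> | Hne ].
    - exists 0. split; [reflexivity|]. intros k Hk. assert (k=0) by lia. subst.
      split; [exact p0|lia].
    - destruct (Htot M x0 pM p0 Hne) as [Ry|Ry]; [exfalso; exact (Hmin M pM Ry)|].
      exact (cover x0 pi R HT HF p0 M pM Ry). }
  destruct HN as [N [HNM HC]].
  exists (S N).
  apply (iso_gen pi R (fin_lt (S N)) (exist (fun k => k < S N) 0 (Nat.lt_0_succ N))
           (fun a => fseq x0 pi R (proj1_sig a)) HT).
  - intros [k Hk]. simpl. apply (HC k); lia.
  - intros [a Ha] [b Hb] H. unfold fin_lt in H. simpl in *.
    apply (chain_mono x0 pi R N HT HC); lia.
  - intros [a Ha] [b Hb]. unfold fin_lt; simpl.
    destruct (Nat.lt_trichotomy a b) as [H|[H|H]]; auto.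
    right; left. subst. f_equal. apply proof_irrelevance.
  - intros y py. destruct (classic (y = x0)) as [ -> | Hne ].
    { exists (exist (fun k => k < S N) 0 (Nat.lt_0_succ N)). reflexivity. }
    destruct (Htot y x0 py p0 Hne) as [Ry|Ry]; [exfalso; exact (Hmin y py Ry)|].
    destruct (cover x0 pi R HT HF p0 y py Ry) as [k [Hk HCk]].
    assert (HkN : k < S N).
    { destruct (Nat.lt_ge_cases N k) as [Hlt|Hge]; [|lia]. exfalso.
      pose proof (chain_mono x0 pi R k HT HCk N k Hlt (le_n k)) as H.
      rewrite HNM, Hk in H. exact (Hmax y py H). }
    exists (exist _ k HkN). exact Hk.
Qed.

Lemma nomax_of {T} (pi : T -> Prop) R : strict_total_on T pi R -> ~ has_max T pi R -> nomax pi R.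
Proof.
  intros [_ [_ Htot]] H x px. apply NNPP; intro N. apply H. exists x. split; auto.
  intros z pz Hne. destruct (Htot z x pz px Hne) as [h|h]; auto. exfalso; apply N; eauto.
Qed.

Lemma nomin_of {T} (pi : T -> Prop) R : strict_total_on T pi R -> ~ has_min T pi R ->
  nomax pi (flip_rel R).
Proof.
  intros [_ [_ Htot]] H x px. apply NNPP; intro N. apply H. exists x. split; auto.
  intros z pz Hne. destruct (Htot z x pz px Hne) as [h|h]; auto. exfalso; apply N; eauto.
Qed.

Lemma min_of {T} (pi : T -> Prop) R : strict_total_on T pi R -> has_min T pi R ->
  exists m, pi m /\ forall y, pi y -> ~ R y m.
Proof.
  intros [Hirr [Htr _]] [m [pm Hm]]. exists m. split; auto. intros y py Ry.
  destruct (classic (y = m)) as [ -> | Hne ]; [exact (Hirr m pm Ry)|].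
  exact (Hirr y py (Htr y m y py pm py Ry (Hm y py Hne))).
Qed.

Lemma max_of {T} (pi : T -> Prop) R : strict_total_on T pi R -> has_max T pi R ->
  exists m, pi m /\ forall y, pi y -> ~ R m y.
Proof.
  intros [Hirr [Htr _]] [m [pm Hm]]. exists m. split; auto. intros y py Ry.
  destruct (classic (y = m)) as [ -> | Hne ]; [exact (Hirr m pm Ry)|].
  exact (Hirr y py (Htr y m y py pm py (Hm y py Hne) Ry)).
Qed.

Lemma sopp_Zer s : sopp s = Zer -> s = Zer.
Proof. destruct s; simpl; congruence. Qed.
Lemma sopp_fix s : s = sopp s -> s = Zer.
Proof. destruct s; simpl; congruence. Qed.

Lemma zero_exists E L : simple_AOM E L -> forall e, exists X, L X /\ X e = Zer.
Proof.
  intros [[_ [HSE _]] [Hnr _]] e. specialize (Hnr e). unfold redundant in Hnr.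
  apply NNPP; intro N. apply Hnr. intros X Y LX LY.
  destruct (classic (X e = Y e)) as [h|h]; auto. exfalso.
  assert (H1 : X e <> Zer) by (intro; apply N; eauto).
  assert (H2 : Y e <> Zer) by (intro; apply N; eauto).
  destruct (HSE X Y e LX LY (conj H1 (conj H2 h))) as [Z HZ]. unfold Ie in HZ.
  destruct HZ as [LZ [Ze _]]. apply N; eauto.
Qed.

Lemma key E L pi R e0 : is_pi_order E L pi R ->
  (forall f, pi f <-> f = e0 \/ parallel E L e0 f) ->
  (forall e, exists X, L X /\ X e = Zer) ->
  forall a b c X Z, pi a -> pi b -> pi c -> R a b -> R b c -> L X -> L Z ->
  X a = Zer -> Z c = Zer -> X b = Zer -> Z b = Zer -> False.
Proof.
  intros HPO Hcls Hz a b c X Z pa pb pc Rab Rbc LX LZ Xa Zc Xb Zb.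
  destruct HPO as [[Hirr [Htr Htot]] Hbw].
  assert (Hbt: forall p q r, pi p -> pi q -> pi r -> R p q -> R q r ->
            forall X Z, L X -> L Z -> X p = Zer -> Z r = Zer -> X q = sopp (Z q)).
  { intros p q r pp pq pr Rpq Rqr.
    destruct (proj2 (Hbw p q r pp pq pr) (or_introl (conj Rpq Rqr))) as [_ [_ [_ H]]].
    exact H. }
  assert (Hne: forall p q, pi p -> R p q -> p <> q)
    by (intros p q pp Rpq Ee; subst; exact (Hirr q pp Rpq)).
  assert (pe0 : pi e0) by (apply Hcls; left; reflexivity).
  assert (NZ: forall p q X, pi p -> pi q -> p <> q -> L X -> X p = Zer -> X q = Zer ->
             p = e0 \/ q = e0 -> False).
  { intros p q Y pp pq Hpq LY Yp Yq [ -> | -> ].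
    - destruct (proj1 (Hcls q) pq) as [ -> | Hpar ]; [exact (Hpq eq_refl)|].
      apply Hpar. exists Y. auto.
    - destruct (proj1 (Hcls p) pp) as [ -> | Hpar ]; [exact (Hpq eq_refl)|].
      apply Hpar. exists Y. auto. }
  destruct (classic (e0 = a)) as [Ea|Ea].
  { apply (NZ a b X pa pb (Hne _ _ pa Rab) LX Xa Xb). left; auto. }
  destruct (classic (e0 = b)) as [Eb|Eb].
  { apply (NZ a b X pa pb (Hne _ _ pa Rab) LX Xa Xb). right; auto. }
  destruct (classic (e0 = c)) as [Ec|Ec].
  { apply (NZ b c Z pb pc (Hne _ _ pb Rbc) LZ Zb Zc). right; auto. }
  destruct (Htot e0 a pe0 pa Ea) as [Ra|Ra].
  - destruct (Hz e0) as [X0 [LX0 X0e]].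
    pose proof (Hbt e0 a b pe0 pa pb Ra Rab X0 X LX0 LX X0e Xb) as H.
    rewrite Xa in H. simpl in H. apply (NZ e0 a X0 pe0 pa Ea LX0 X0e H). left; auto.
  - destruct (Htot e0 b pe0 pb Eb) as [Rb|Rb].
    + pose proof (Hbt a e0 b pa pe0 pb Ra Rb X X LX LX Xa Xb) as H.
      apply sopp_fix in H.
      apply (NZ a e0 X pa pe0 (fun h => Ea (eq_sym h)) LX Xa H). right; auto.
    + destruct (Htot e0 c pe0 pc Ec) as [Rc|Rc].
      * pose proof (Hbt b e0 c pb pe0 pc Rb Rc Z Z LZ LZ Zb Zc) as H.
        apply sopp_fix in H. apply (NZ e0 c Z pe0 pc Ec LZ H Zc). left; auto.
      * destruct (Hz e0) as [X0 [LX0 X0e]].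
        pose proof (Hbt b c e0 pb pc pe0 Rbc Rc Z X0 LZ LX0 Zb X0e) as H.
        rewrite Zc in H. symmetry in H. apply sopp_Zer in H.
        apply (NZ c e0 X0 pc pe0 (fun h => Ec (eq_sym h)) LX0 H X0e). right; auto.
Qed.

Lemma FI_pi E L pi R : simple_AOM E L -> finite_separators E L ->
  parallelism_class E L pi -> is_pi_order E L pi R -> FI pi R.
Proof.
  intros HS HFS [e0 Hcls] HPO a c pa pc.
  pose proof (zero_exists E L HS) as Hz.
  destruct (Hz a) as [X [LX Xa]]. destruct (Hz c) as [Z [LZ Zc]].
  destruct (HFS X Z LX LZ) as [l Hl]. exists l. intros b pb Rab Rbc. apply Hl.
  assert (Hb: X b = sopp (Z b)).
  { destruct HPO as [_ Hbw].
    destruct (proj2 (Hbw a b c pa pb pc) (or_introl (conj Rab Rbc))) as [_ [_ [_ H]]].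
    exact (H X Z LX LZ Xa Zc). }
  assert (Zb: Z b <> Zer).
  { intro Zb. apply (key E L pi R e0 HPO Hcls Hz a b c X Z pa pb pc Rab Rbc LX LZ Xa Zc);
      [rewrite Hb, Zb; reflexivity | exact Zb]. }
  unfold sep. rewrite Hb.
  destruct (Z b) eqn:Eb; simpl; [repeat split; discriminate | repeat split; discriminate | congruence].
Qed.

Theorem lemma3p13 (E : Type) (L : svset E) (pi : E -> Prop) (lt : E -> E -> Prop) :
  simple_AOM E L ->
  finite_separators E L ->
  parallelism_class E L pi ->
  is_pi_order E L pi lt ->
  (* neither minimum nor maximum: (Z,<) *)
  ((~ has_min E pi lt /\ ~ has_max E pi lt) ->
     order_iso (restr pi lt) Z.lt \/ order_iso (restr pi (flip_rel lt)) Z.lt) /\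
  (* exactly one extremum: (N,<), reversed if necessary *)
  ((has_min E pi lt /\ ~ has_max E pi lt) \/ (~ has_min E pi lt /\ has_max E pi lt) ->
     order_iso (restr pi lt) Nat.lt \/ order_iso (restr pi (flip_rel lt)) Nat.lt) /\
  (* both minimum and maximum: pi finite, ({0,...,|pi|-1},<) *)
  ((has_min E pi lt /\ has_max E pi lt) ->
     exists n : nat,
       order_iso (restr pi lt) (fin_lt n) \/ order_iso (restr pi (flip_rel lt)) (fin_lt n)).
Proof.
  intros HS HFS Hcl HPO.
  pose proof (FI_pi E L pi lt HS HFS Hcl HPO) as HF.
  pose proof (proj1 HPO) as HT.
  pose proof (flip_total pi lt HT) as HT'. pose proof (flip_FI pi lt HF) as HF'.
  assert (p0 : exists e0, pi e0) by (destruct Hcl as [e0 Hc]; exists e0; apply Hc; left; auto).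
  destruct p0 as [e0 pe0].
  split; [|split].
  - intros [Hmn Hmx]. left.
    exact (iso_Z pi lt e0 HT HF pe0 (nomax_of pi lt HT Hmx) (nomin_of pi lt HT Hmn)).
  - intros [[Hmn Hmx]|[Hmn Hmx]].
    + left. destruct (min_of pi lt HT Hmn) as [m [pm Hm]].
      exact (iso_nat pi lt m HT HF pm Hm (nomax_of pi lt HT Hmx)).
    + right. destruct (max_of pi lt HT Hmx) as [m [pm Hm]].
      exact (iso_nat pi (flip_rel lt) m HT' HF' pm Hm (nomin_of pi lt HT Hmn)).
  - intros [Hmn Hmx]. destruct (min_of pi lt HT Hmn) as [m [pm Hm]].
    destruct (max_of pi lt HT Hmx) as [M [pM HM]].
    destruct (iso_fin pi lt m M HT HF pm Hm pM HM) as [n Hn]. exists n. left; exact Hn.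
Qed.
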